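(* Let $k\ge4$ be an integer and $\eta\in[\eta_{k+1},\eta_k)$. Then $0,1\in\mathrm{co}(V_k)$, where $V_k=\{b_0,z_0,z_1,\dots,z_k,w_1,\dots,w_k\}$.
   Context: For $\eta\in(0,\pi/3)$ let $a=\frac{e^{-i\eta}}{2\cos\eta}$, $c=\frac{1}{1-|a|^4}$, and for integers $j\ge0$ put $z_j=ca^{j+1}$, $w_j=1-c|a|^2a^j$, $b_0=a+c|a|^4$. For integers $k\ge1$ let $\Phi_k(\eta)=(1-|a|^4)\sin((k-1)\eta)-|a|^3\sin((k-2)\eta)+|a|^k\sin\eta$; for each $k\ge4$, $\Phi_k$ has a unique zero in $(\pi/k,\pi/(k-1))$, denoted $\eta_k$. $\mathrm{co}$ denotes convex hull. *)

(* Defs.v *)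
From Stdlib Require Import Reals List.
From Coquelicot Require Import Coquelicot.
Import ListNotations.
Open Scope R_scope.

(* a = e^{-i eta} / (2 cos eta) *)
Definition a_of (eta : R) : C := ((cos eta / (2 * cos eta)), (- sin eta / (2 * cos eta))).
(* |a| = 1/(2 cos eta) (eta in (0,pi/3) so cos eta > 0) *)
Definition absa (eta : R) : R := Cmod (a_of eta).
Definition c_of (eta : R) : R := 1 / (1 - absa eta ^ 4).

Definition z_of (eta : R) (j : nat) : C := (RtoC (c_of eta) * (a_of eta) ^ (S j))%C.
Definition w_of (eta : R) (j : nat) : C :=
  (RtoC 1 - RtoC (c_of eta * absa eta ^ 2) * (a_of eta) ^ j)%C.
Definition b0_of (eta : R) : C := (a_of eta + RtoC (c_of eta * absa eta ^ 4))%C.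

Definition Phi (k : nat) (eta : R) : R :=
  (1 - absa eta ^ 4) * sin ((INR k - 1) * eta)
  - absa eta ^ 3 * sin ((INR k - 2) * eta)
  + absa eta ^ k * sin eta.

Definition V_of (eta : R) (k : nat) : list C :=
  b0_of eta :: map (z_of eta) (List.seq 0 (S k)) ++ map (w_of eta) (List.seq 1 k).

Definition in_co (pts : list C) (p : C) : Prop :=
  exists l : list R,
    List.length l = List.length pts /\ List.Forall (fun t => 0 <= t) l /\
    fold_right Rplus 0 l = 1 /\
    fold_right Cplus (RtoC 0) (map (fun q : R * C => (RtoC (fst q) * snd q)%C) (combine l pts)) = p.

(* Main.v *)
Require Import Defs.
From Stdlib Require Import Reals List Lra Lia.
From Coquelicot Require Import Coquelicot.
Open Scope R_scope.

Definition cone (T : list C) (s : R) (v : C) : Prop :=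
  exists l : list R,
    List.length l = List.length T /\ List.Forall (fun t => 0 <= t) l /\
    fold_right Rplus 0 l = s /\
    fold_right Cplus (RtoC 0) (map (fun q : R * C => (RtoC (fst q) * snd q)%C) (combine l T)) = v.

Lemma Ceq (x y : C) : fst x = fst y -> snd x = snd y -> x = y.
Proof. destruct x, y; simpl; intros; subst; reflexivity. Qed.

Lemma cone_zero T : cone T 0 (RtoC 0).
Proof.
  induction T as [|h T IH].
  - exists nil; simpl; repeat split; auto.
  - destruct IH as [l [H1 [H2 [H3 H4]]]].
    exists (0 :: l); simpl; repeat split.
    + now rewrite H1.
    + constructor; [lra|auto].
    + rewrite H3; ring.
    + rewrite H4. apply Ceq; simpl; ring.
Qed.

Lemma cone_single T x w : In x T -> 0 <= w -> cone T w (RtoC w * x)%C.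
Proof.
  induction T as [|h T IH]; intros Hin Hw; [destruct Hin|].
  destruct Hin as [<-|Hin].
  - destruct (cone_zero T) as [l [H1 [H2 [H3 H4]]]].
    exists (w :: l); simpl; repeat split.
    + now rewrite H1.
    + constructor; auto.
    + rewrite H3; ring.
    + rewrite H4. apply Ceq; simpl; ring.
  - destruct (IH Hin Hw) as [l [H1 [H2 [H3 H4]]]].
    exists (0 :: l); simpl; repeat split.
    + now rewrite H1.
    + constructor; [lra|auto].
    + rewrite H3; ring.
    + rewrite H4. apply Ceq; simpl; ring.
Qed.

Lemma cone_add T s1 v1 s2 v2 : cone T s1 v1 -> cone T s2 v2 -> cone T (s1 + s2) (v1 + v2)%C.
Proof.
  revert s1 v1 s2 v2.
  induction T as [|h T IH]; intros s1 v1 s2 v2 [l1 [A1 [B1 [C1 D1]]]] [l2 [A2 [B2 [C2 D2]]]].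
  - destruct l1; [|discriminate]. destruct l2; [|discriminate].
    simpl in *. subst. exists nil. simpl. split; [reflexivity|]. split; [constructor|].
    split; [ring|]. apply Ceq; simpl; ring.
  - destruct l1 as [|x1 l1]; [discriminate|]. destruct l2 as [|x2 l2]; [discriminate|].
    simpl in *. inversion A1. inversion A2. inversion B1. inversion B2. subst.
    destruct (IH _ _ _ _ (ex_intro _ l1 (conj H0 (conj H4 (conj eq_refl eq_refl))))
                        (ex_intro _ l2 (conj H1 (conj H8 (conj eq_refl eq_refl)))))
      as [l [E1 [E2 [E3 E4]]]].
    exists (x1 + x2 :: l); simpl; repeat split.
    + now rewrite E1.
    + constructor; [lra|auto].
    + rewrite E3; ring.
    + rewrite E4. apply Ceq; simpl; ring.
Qed.

Definition cross (p q : C) : R := fst p * snd q - snd p * fst q.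

Lemma tri T p q s o : In p T -> In q T -> In s T ->
  cross (p - o)%C (q - o)%C < 0 -> cross (q - o)%C (s - o)%C < 0 -> cross (s - o)%C (p - o)%C < 0 ->
  in_co T o.
Proof.
  intros Hp Hq Hs H1 H2 H3.
  set (lp := cross (q - o)%C (s - o)%C) in *.
  set (lq := cross (s - o)%C (p - o)%C) in *.
  set (ls := cross (p - o)%C (q - o)%C) in *.
  set (D := lp + lq + ls).
  assert (HD : D < 0) by (unfold D; lra).
  assert (Hn : forall x, x < 0 -> 0 <= x / D).
  { intros x Hx. unfold Rdiv. assert (/ D < 0) by (apply Rinv_lt_0_compat; lra).
    nra. }
  destruct (cone_add _ _ _ _ _ (cone_add _ _ _ _ _
     (cone_single T p (lp / D) Hp (Hn lp H2))
     (cone_single T q (lq / D) Hq (Hn lq H3)))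
     (cone_single T s (ls / D) Hs (Hn ls H1)))
    as [l [E1 [E2 [E3 E4]]]].
  exists l; repeat split; auto.
  - rewrite E3. unfold D. field. unfold D in HD. lra.
  - rewrite E4. unfold D in *. unfold lp, lq, ls, cross in *.
    destruct p as [p1 p2], q as [q1 q2], s as [s1 s2], o as [o1 o2].
    simpl in *. apply Ceq; simpl; field; lra.
Qed.

Lemma a_pow e n : cos e <> 0 ->
  (a_of e ^ n)%C = (( / (2 * cos e)) ^ n * cos (INR n * e), - (( / (2 * cos e)) ^ n * sin (INR n * e))).
Proof.
  intros Hc. induction n as [|n IH].
  - simpl. rewrite Rmult_0_l, cos_0, sin_0. apply Ceq; simpl; ring.
  - change (a_of e ^ S n)%C with (a_of e * a_of e ^ n)%C. rewrite IH.
    rewrite S_INR. replace ((INR n + 1) * e) with (INR n * e + e) by ring.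
    rewrite cos_plus, sin_plus. unfold a_of. apply Ceq; simpl; field; auto.
Qed.

Lemma absa_eq e : 0 < cos e -> absa e = / (2 * cos e).
Proof.
  intros Hc. unfold absa, Cmod, a_of. simpl.
  assert (H := sin2_cos2 e). unfold Rsqr in H.
  replace ((cos e / (2 * cos e)) * ((cos e / (2 * cos e)) * 1) +
           (- sin e / (2 * cos e)) * ((- sin e / (2 * cos e)) * 1))
    with ((/ (2 * cos e)) ^ 2).
  - apply sqrt_pow2. apply Rlt_le, Rinv_0_lt_compat; lra.
  - transitivity ((sin e * sin e + cos e * cos e) / (2 * cos e) ^ 2).
    + rewrite H. field. lra.
    + field. lra.
Qed.

Lemma neg_mul2 x y : 0 < x -> y < 0 -> x * y < 0.
Proof. intros; nra. Qed.

Ltac pos := lazymatch goal with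
  | |- 0 < ?x * ?y => apply Rmult_lt_0_compat; [pos|pos]
  | |- 0 < ?x ^ ?n => apply pow_lt; pos
  | _ => lra end.

Lemma neg_mul x y : 0 < x -> 0 < y -> x * (- y) < 0.
Proof. intros; nra. Qed.

Theorem lemma6p3 (k : nat) (eta_k eta_k1 eta : R) :
  (4 <= k)%nat ->
  PI / INR k < eta_k < PI / (INR k - 1) -> Phi k eta_k = 0 ->
  PI / (INR k + 1) < eta_k1 < PI / INR k -> Phi (S k) eta_k1 = 0 ->
  eta_k1 <= eta < eta_k ->
  in_co (V_of eta k) (RtoC 0) /\ in_co (V_of eta k) (RtoC 1).
Proof.
  intros Hk [_ Hek] _ [Hek1 _] _ [He1 He2].
  destruct k as [|[|m]]; try lia.
  assert (Hm : 2 <= INR m) by (apply (le_INR 2); lia).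
  assert (Ek : INR (S (S m)) = INR m + 2) by (rewrite !S_INR; ring).
  rewrite Ek in Hek, Hek1.
  assert (PIpos := PI_RGT_0).
  assert (Hup : (INR m + 1) * eta < PI).
  { apply Rlt_le_trans with ((INR m + 1) * (PI / (INR m + 2 - 1))).
    - apply Rmult_lt_compat_l; lra.
    - right. field. lra. }
  assert (Hlo : PI < (INR m + 3) * eta).
  { apply Rle_lt_trans with ((INR m + 3) * (PI / (INR m + 2 + 1))).
    - right. field. lra.
    - apply Rmult_lt_compat_l; lra. }
  assert (Hepos : 0 < eta) by nra.
  assert (He3 : eta < PI / 3) by (apply Rmult_lt_reg_l with 3; [lra|]; field_simplify; nra).
  assert (Hcos : 1/2 < cos eta).
  { rewrite <- cos_PI3. apply cos_decreasing_1; lra. }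
  assert (Hsin : 0 < sin eta) by (apply sin_gt_0; lra).
  set (r := / (2 * cos eta)).
  assert (Hr1 : r < 1).
  { unfold r. rewrite <- Rinv_1. apply Rinv_lt_contravar; lra. }
  assert (Hr0 : 0 < r) by (unfold r; apply Rinv_0_lt_compat; lra).
  assert (Hr4 : 0 < 1 - r ^ 4).
  { assert (r ^ 4 < 1). { assert (r ^ 2 < 1) by nra. assert (0 < r ^ 2) by nra. replace (r ^ 4) with (r^2 * r^2) by ring. nra. } lra. }
  set (c := c_of eta).
  assert (Hc : c = / (1 - r ^ 4)) by (unfold c, c_of; rewrite absa_eq by lra; fold r; field; lra).
  assert (Hc1 : 1 <= c).
  { rewrite Hc. rewrite <- Rinv_1. apply Rinv_le_contravar; [lra|]. assert (0 < r^4) by (apply pow_lt; lra). lra. }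
  set (th := INR (S m) * eta).
  assert (Sth : 0 < sin th) by (apply sin_gt_0; unfold th; rewrite S_INR; nra).
  assert (Sth2 : sin (th + 2 * eta) < 0).
  { apply sin_lt_0; unfold th; rewrite S_INR; nra. }
  assert (Hkey : sin (th + eta) < r * sin th).
  { assert (E : 2 * cos eta * sin (th + eta) = sin th + sin (th + 2 * eta)).
    { rewrite (sin_plus th eta), (sin_plus th (2 * eta)), cos_2a, sin_2a.
      assert (H := sin2_cos2 eta). unfold Rsqr in H.
      apply Rminus_diag_uniq.
      match goal with |- ?A - ?B = 0 =>
        replace (A - B) with (sin th * (sin eta * sin eta + cos eta * cos eta - 1)) by ring end.
      rewrite H. ring. }
    unfold r. apply Rmult_lt_reg_l with (2 * cos eta); [lra|].
    rewrite <- Rmult_assoc, Rinv_r, Rmult_1_l; lra. }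
  set (f1 := th + eta). set (f2 := th + 2 * eta).
  assert (A1 : INR (S (S m)) * eta = f1) by (unfold f1, th; rewrite (S_INR (S m)); ring).
  assert (A2 : INR (S (S (S m))) * eta = f2) by (unfold f2, th; rewrite (S_INR (S (S m))), (S_INR (S m)); ring).
  assert (Hc0 : cos eta <> 0) by lra.
  set (R1 := r ^ S m). set (R2 := r ^ S (S m)). set (R3 := r ^ S (S (S m))).
  assert (P1 : 0 < R1) by (apply pow_lt; lra).
  assert (P2 : 0 < R2) by (apply pow_lt; lra).
  assert (P3 : 0 < R3) by (apply pow_lt; lra).
  assert (Pc : 0 < c) by lra.
  assert (S2 : 0 < sin (2 * eta)) by (apply sin_gt_0; lra).
  assert (D1 : sin th * cos f2 - cos th * sin f2 = - sin (2 * eta)).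
  { rewrite <- sin_minus. replace (th - f2) with (- (2 * eta)) by (unfold f2; ring). apply sin_neg. }
  assert (D2 : cos f2 * sin f1 - sin f2 * cos f1 = - sin eta).
  { rewrite Rmult_comm, (Rmult_comm (sin f2)), <- sin_minus.
    replace (f1 - f2) with (- eta) by (unfold f1, f2; ring). apply sin_neg. }
  assert (D3 : cos f1 * sin th - sin f1 * cos th = - sin eta).
  { rewrite Rmult_comm, (Rmult_comm (sin f1)), <- sin_minus.
    replace (th - f1) with (- eta) by (unfold f1; ring). apply sin_neg. }
  assert (D4 : sin eta * cos f1 - cos eta * sin f1 = - sin th).
  { rewrite <- sin_minus. replace (eta - f1) with (- th) by (unfold f1; ring). apply sin_neg. }
  assert (Inz : forall j, (j <= S (S m))%nat -> In (z_of eta j) (V_of eta (S (S m)))).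
  { intros j Hj. unfold V_of. right. apply in_or_app. left. apply in_map. apply in_seq. lia. }
  assert (Inw : forall j, (1 <= j <= S (S m))%nat -> In (w_of eta j) (V_of eta (S (S m)))).
  { intros j Hj. unfold V_of. right. apply in_or_app. right. apply in_map. apply in_seq. lia. }
  split.
  - apply (tri _ _ _ _ _ (Inz m ltac:(lia)) (Inz (S (S m)) ltac:(lia)) (Inw (S (S m)) ltac:(lia)));
    unfold z_of, w_of; rewrite ?absa_eq by lra; fold r c;
    rewrite !a_pow by exact Hc0; rewrite ?A1, ?A2; fold th; fold r; fold R1 R2 R3;
    unfold cross, Cminus, Cplus, Copp, Cmult, RtoC; cbn [fst snd].
    + match goal with |- ?A < 0 =>
        replace A with (c * c * R1 * R3 * (sin th * cos f2 - cos th * sin f2)) by ring end.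
      rewrite D1. apply neg_mul; pos.
    + match goal with |- ?A < 0 =>
        replace A with (c * c * r ^ 2 * R3 * R2 * (cos f2 * sin f1 - sin f2 * cos f1) + (c * R3) * sin f2) by ring end.
      rewrite D2.
      assert (c * c * r ^ 2 * R3 * R2 * - sin eta < 0) by (apply neg_mul; pos).
      assert (c * R3 * sin f2 < 0) by (apply neg_mul2; [pos|exact Sth2]). lra.
    + match goal with |- ?A < 0 =>
        replace A with (c * c * r ^ 2 * R2 * R1 * (cos f1 * sin th - sin f1 * cos th) + (c * R1) * - sin th) by ring end.
      rewrite D3.
      assert (c * c * r ^ 2 * R2 * R1 * - sin eta < 0) by (apply neg_mul; pos).
      assert (c * R1 * - sin th < 0) by (apply neg_mul; pos). lra.
  - apply (tri _ _ _ _ _ (Inz 0%nat ltac:(lia)) (Inw 1%nat ltac:(lia)) (Inw (S (S m)) ltac:(lia)));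
    unfold z_of, w_of; rewrite ?absa_eq by lra; fold r c;
    rewrite !a_pow by exact Hc0; rewrite ?A1, ?A2; fold th; fold r; fold R1 R2 R3;
    replace (INR 1 * eta) with eta by (simpl; ring);
    unfold cross, Cminus, Cplus, Copp, Cmult, RtoC; cbn [fst snd].
    + match goal with |- ?A < 0 =>
        replace A with ((c * r ^ 3) * - sin eta) by ring end.
      apply neg_mul; pos.
    + match goal with |- ?A < 0 =>
        replace A with (c * c * r ^ 5 * R2 * (sin eta * cos f1 - cos eta * sin f1)) by ring end.
      rewrite D4. apply neg_mul; pos.
    + match goal with |- ?A < 0 =>
        replace A with (c * c * r ^ 3 * R2 * (sin eta * cos f1 - cos eta * sin f1) + c * r ^ 2 * R2 * sin f1) by ring end.
      rewrite D4.
      replace (c * c * r ^ 3 * R2 * - sin th + c * r ^ 2 * R2 * sin f1)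
        with ((c * r ^ 2 * R2) * (sin f1 - c * r * sin th)) by ring.
      apply neg_mul2; [pos|].
      assert (0 < r * sin th) by pos.
      assert (r * sin th <= c * r * sin th) by nra.
      unfold f1. lra.
Qed.
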